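(* Let $0<|a|<M$. Then $$\{\xi_t<0\}\cap\{\xi\cdot v_{\mathcal H}>0\}\cap K=\emptyset,$$ where $K\subset T^*{\rm M}_{\rm I}\setminus o$ is the trapped set.
   Context: ${\rm M}_{\rm I}=\mathbb R_t\times(r_+,\infty)_r\times\mathbb S^2_{\theta,\varphi}$ is the Kerr exterior in Boyer–Lindquist coordinates with $r_+=M+\sqrt{M^2-a^2}$, $\Delta=r^2-2Mr+a^2$, $\rho^2=r^2+a^2\cos^2\theta$, $\sigma^2=(r^2+a^2)^2-a^2\Delta\sin^2\theta$, and metric $g=-(1-\tfrac{2Mr}{\rho^2})dt^2-\tfrac{4aMr\sin^2\theta}{\rho^2}dt\,d\varphi+\tfrac{\rho^2}{\Delta}dr^2+\rho^2d\theta^2+\tfrac{\sigma^2}{\rho^2}\sin^2\theta\,d\varphi^2$. Covectors are $\xi=\xi_tdt+\xi_rdr+\xi_\theta d\theta+\xi_\varphi d\varphi$, $\tilde\xi=(\xi_t,\xi_r,\xi_\varphi,\xi_\theta)$. Set $G_r=\Delta\xi_r^2-\frac1\Delta((r^2+a^2)\xi_t+a\xi_\varphi)^2$, $G_\theta=\xi_\theta^2+\frac1{\sin^2\theta}(a\sin^2\theta\xi_t+\xi_\varphi)^2$, $G=G_r+G_\theta=\rho^{-2}g^{-1}(\xi,\xi)$. The trapped set is $K=\{G=\partial_rG_r=\xi_r=0,\ \tilde\xi\neq0\}$ (with $\partial_r$ taken at fixed $\xi$). The Killing field $v_{\mathcal H}=\partial_t+\Omega_{\mathcal H}\partial_\varphi$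 with $\Omega_{\mathcal H}=a/(r_+^2+a^2)$, so $\xi\cdot v_{\mathcal H}=\xi_t+\Omega_{\mathcal H}\xi_\varphi$ (on the rotation axis $v_{\mathcal H}=\partial_t$ in the regular coordinates $(t,r,x_1,x_2)$, $x_1=\sin\theta\cos\varphi$, $x_2=\sin\theta\sin\varphi$). *)

(* Defs.v *)
From Stdlib Require Import Reals.
From Coquelicot Require Import Coquelicot.
Open Scope R_scope.

(* Kerr quantities in Boyer--Lindquist coordinates. *)
Definition r_plus (M a : R) : R := M + sqrt (M ^ 2 - a ^ 2).
Definition Delta (M a r : R) : R := r ^ 2 - 2 * M * r + a ^ 2.
Definition Omega_H (M a : R) : R := a / (r_plus M a ^ 2 + a ^ 2).

(* G_r and G_theta for the covector xi = xi_t dt + xi_r dr + xi_th dth + xi_ph dph *)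
Definition G_r (M a r xi_t xi_r xi_ph : R) : R :=
  Delta M a r * xi_r ^ 2
  - / Delta M a r * ((r ^ 2 + a ^ 2) * xi_t + a * xi_ph) ^ 2.

Definition G_th (a th xi_t xi_th xi_ph : R) : R :=
  xi_th ^ 2 + / (sin th ^ 2) * (a * sin th ^ 2 * xi_t + xi_ph) ^ 2.

Definition G (M a r th xi_t xi_r xi_th xi_ph : R) : R :=
  G_r M a r xi_t xi_r xi_ph + G_th a th xi_t xi_th xi_ph.

(* Trapped set K = {G = d_r G_r = xi_r = 0, tilde xi <> 0}, where d_r is
   taken at fixed xi (the components of xi are held constant). *)
Definition trapped (M a r th xi_t xi_r xi_th xi_ph : R) : Prop :=
  G M a r th xi_t xi_r xi_th xi_ph = 0 /\
  Derive (fun s => G_r M a s xi_t xi_r xi_ph) r = 0 /\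
  xi_r = 0 /\
  ~ (xi_t = 0 /\ xi_r = 0 /\ xi_ph = 0 /\ xi_th = 0).

(* Main.v *)
Require Import Defs.
From Stdlib Require Import Reals Lra Psatz.
From Coquelicot Require Import Coquelicot.
Open Scope R_scope.

Lemma derGr (M a r xi_t xi_r xi_ph : R) : Defs.Delta M a r <> 0 ->
  Derive (fun s => G_r M a s xi_t xi_r xi_ph) r =
  (2*r - 2*M) * xi_r^2 + (2*r - 2*M) * / (Defs.Delta M a r)^2 * ((r^2+a^2)*xi_t + a*xi_ph)^2
   - / Defs.Delta M a r * (2 * ((r^2+a^2)*xi_t + a*xi_ph) * (2*r*xi_t)).
Proof.
  intro HD. apply is_derive_unique. unfold G_r, Defs.Delta in *.
  auto_derive; [exact HD|]. field. exact HD.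
Qed.

Theorem lemma6p5 (M a : R) (Ha : 0 < Rabs a < M) :
  forall t r th ph xi_t xi_r xi_th xi_ph : R,
    r_plus M a < r -> 0 < th < PI ->
    trapped M a r th xi_t xi_r xi_th xi_ph ->
    ~ (xi_t < 0 /\ xi_t + Omega_H M a * xi_ph > 0).
Proof.
  intros t r th ph xi_t xi_r xi_th xi_ph Hr Hth [HG [Hd [Hxr Hnz]]] [Ht HQ].
  subst xi_r.
  assert (Ha2 : a^2 < M^2).
  { destruct Ha as [H1 H2]. rewrite <- (pow2_abs a). nra. }
  assert (HM : 0 < M) by (destruct Ha; pose proof (Rabs_pos a); lra).
  set (s := sqrt (M^2 - a^2)).
  assert (Hs : 0 < s) by (apply sqrt_lt_R0; lra).
  assert (Hs2 : s * s = M^2 - a^2) by (apply sqrt_sqrt; lra).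
  unfold r_plus in Hr. fold s in Hr.
  assert (HD : 0 < Defs.Delta M a r) by (unfold Defs.Delta; nra).
  rewrite derGr in Hd by lra.
  set (D := Defs.Delta M a r) in *.
  set (P := (r^2+a^2)*xi_t + a*xi_ph) in *.
  assert (Hd2 : P * ((r - M) * P - 2 * r * xi_t * D) = 0).
  { apply (f_equal (fun x => x * D^2 / 2)) in Hd.
    replace (((2 * r - 2 * M) * 0 ^ 2 + (2 * r - 2 * M) * / D ^ 2 * P ^ 2 -
       / D * (2 * P * (2 * r * xi_t))) * D ^ 2 / 2) with
      (P * ((r - M) * P - 2 * r * xi_t * D)) in Hd by (field; lra).
    lra. }
  assert (Hsin : 0 < sin th) by (apply sin_gt_0; lra).
  destruct (Req_dec P 0) as [HP0 | HP0].
  - (* P = 0 : then G_th = 0 *)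
    unfold G, G_r, G_th in HG. fold D in HG. fold P in HG.
    rewrite HP0 in HG.
    set (W := a * sin th ^ 2 * xi_t + xi_ph) in *.
    assert (Hs2p : 0 < sin th ^ 2) by nra.
    assert (HW : / sin th ^ 2 * W ^ 2 >= 0).
    { apply Rle_ge, Rmult_le_pos; [left; apply Rinv_0_lt_compat; lra | nra]. }
    assert (Hth0 : xi_th = 0) by nra.
    assert (HW0 : W ^ 2 = 0).
    { assert (/ sin th ^ 2 * W ^ 2 = 0) by nra.
      apply Rmult_integral in H. destruct H as [H|H]; auto.
      exfalso. apply (Rinv_neq_0_compat (sin th ^ 2)); lra. }
    assert (HW1 : W = 0) by nra.
    unfold W, P in *.
    assert (Hc : sin th ^ 2 <= 1) by (pose proof (sin2_cos2 th); unfold Rsqr in *; nra).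
    assert (Hx : (r^2 + a^2 - a^2 * sin th ^ 2) * xi_t = 0) by nra.
    assert (Hpos : 0 < r^2 + a^2 - a^2 * sin th ^ 2) by nra.
    assert (xi_t = 0).
    { apply Rmult_integral in Hx. destruct Hx; [lra|auto]. }
    lra.
  - assert (Heq : (r - M) * P = 2 * r * xi_t * D).
    { apply Rmult_integral in Hd2. destruct Hd2; [contradiction|lra]. }
    unfold Omega_H, r_plus in HQ. fold s in HQ.
    set (rp := M + s) in *.
    assert (Hrp0 : 0 < rp) by (unfold rp; lra).
    assert (Hrp : 0 < rp ^ 2 + a ^ 2) by (pose proof (pow2_ge_0 a); nra).
    assert (HQ2 : (rp^2 + a^2) * xi_t + a * xi_ph > 0).
    { pose proof (Rmult_gt_compat_l _ _ _ Hrp HQ) as HQ3. clear HQ. rename HQ3 into HQ.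
      rewrite Rmult_0_r in HQ.
      replace ((rp ^ 2 + a ^ 2) * (xi_t + a / (rp ^ 2 + a ^ 2) * xi_ph))
        with ((rp^2 + a^2) * xi_t + a * xi_ph) in HQ by (field; lra). lra. }
    assert (Hbr : 0 < r^2 + (rp - 3*M) * r + M * rp).
    { replace (r^2 + (rp - 3*M) * r + M * rp) with ((r-rp)*(r+2*rp-3*M) + 2*rp*(rp-M)) by ring.
      assert (0 < (r-rp)*(r+2*rp-3*M)) by (apply Rmult_lt_0_compat; unfold rp in *; lra).
      assert (0 < 2*rp*(rp-M)) by (unfold rp in *; nra). lra. }
    assert (Hid : (r - M) * ((rp^2 + a^2) * xi_t + a * xi_ph)
              = xi_t * (r - rp) * (r^2 + (rp - 3*M) * r + M * rp)).
    { transitivity ((r-M)*P - (r-M)*(r^2 - rp^2)*xi_t).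
      - unfold P. ring.
      - rewrite Heq. unfold D, Defs.Delta, rp.
        replace (a^2) with (M^2 - s*s) by lra. ring. }
    assert (0 < (r - rp) * (r^2 + (rp - 3*M) * r + M * rp)) by nra.
    assert (H2 : 0 < (r - M) * ((rp^2 + a^2) * xi_t + a * xi_ph)).
    { apply Rmult_lt_0_compat; unfold rp in *; lra. }
    rewrite Hid in H2.
    assert (H3 : xi_t * ((r - rp) * (r^2 + (rp - 3*M) * r + M * rp)) < 0).
    { apply Rmult_neg_pos; lra. }
    rewrite <- Rmult_assoc in H3. lra.
Qed.
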